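(* Let $f:\mathbb{R}\to\mathbb{R}$ be a $2\pi$-periodic $\mathcal{C}^{1}$ function with $\int_{0}^{2\pi}f(t)\,dt=0$ and such that $\int_{0}^{2\pi}f^{2}(t)\,dt=\int_{0}^{2\pi}f'^{2}(t)\,dt$. For each odd integer $n\geq 5$, let $X_{n}\in\mathbb{R}^{n}$ be the vector with components $x_{j,n}=f(\frac{2\pi}{n}j)$, $j=1,\dots,n$, and for $k=1,\dots,(n-1)/2$ let $P_{k}$ denote the orthogonal projection of $\mathbb{R}^{n}$ (with the standard inner product) onto the subspace $H_{k}$ spanned by the vectors $$e_{2k}=\sqrt{\tfrac{2}{n}}\left(1,\cos(\tfrac{2\pi}{n}k),\cos(\tfrac{2\pi}{n}2k),\dots,\cos(\tfrac{2\pi}{n}(n-1)k)\right),$$ $$e_{2k+1}=\sqrt{\tfrac{2}{n}}\left(0,\sin(\tfrac{2\pi}{n}k),\sin(\tfrac{2\pi}{n}2k),\dots,\sin(\tfrac{2\pi}{n}(n-1)k)\right).$$ Then, as $n\to\infty$ through odd integers, $$\lim_{n\to\infty}\frac{1}{n}\sum_{k=2}^{(n-1)/2}\|P_{k}(X_{n})\|^{2}= 0.$$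
   Context: Here $\|\cdot\|$ is the Euclidean norm on $\mathbb{R}^n$. The vectors $e_{2k},e_{2k+1}$ ($k=1,\dots,(n-1)/2$), together with $e_1=\frac{1}{\sqrt n}(1,\dots,1)$, form an orthonormal basis of $\mathbb{R}^n$ for odd $n$. *)

(* Defs.v *)
From Stdlib Require Import Reals Lra Lia.
From Coquelicot Require Import Coquelicot.
Open Scope R_scope.

(* Vectors of R^n are represented as functions nat -> R, only the
   components of index 1..n being relevant (1-based as in the paper). *)

Definition dotn (n : nat) (u v : nat -> R) : R :=
  sum_n_m (fun j => u j * v j) 1 n.
Definition sqnorm (n : nat) (u : nat -> R) : R := dotn n u u.

Definition e_cos (n k : nat) : nat -> R :=
  fun j => sqrt (2 / INR n) * cos (2 * PI / INR n * INR (j - 1) * INR k).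
Definition e_sin (n k : nat) : nat -> R :=
  fun j => sqrt (2 / INR n) * sin (2 * PI / INR n * INR (j - 1) * INR k).

Definition in_Hk (n k : nat) (z : nat -> R) : Prop :=
  exists a b : R, forall j, (1 <= j <= n)%nat ->
    z j = a * e_cos n k j + b * e_sin n k j.

Definition is_proj_Hk (n k : nat) (x y : nat -> R) : Prop :=
  in_Hk n k y /\
  forall z, in_Hk n k z -> dotn n (fun j => x j - y j) z = 0.

Definition Xvec (f : R -> R) (n : nat) : nat -> R :=
  fun j => f (2 * PI / INR n * INR j).

(* Main.v *)
Require Import Defs.
From Stdlib Require Import Reals Lra Lia.
From Coquelicot Require Import Coquelicot.
Open Scope R_scope.

Definition C0 (h : R -> R) := forall x, continuous h x.

Lemma cm (f g : R -> R) (x:R) : continuous f x -> continuous g x -> continuous (fun y => f y * g y) x.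
Proof. intros; apply (continuous_mult f g); auto. Qed.
Lemma cp (f g : R -> R) (x:R) : continuous f x -> continuous g x -> continuous (fun y => f y + g y) x.
Proof. intros; apply (continuous_plus f g); auto. Qed.
Lemma cmi (f g : R -> R) (x:R) : continuous f x -> continuous g x -> continuous (fun y => f y - g y) x.
Proof. intros; apply (continuous_minus f g); auto. Qed.
Lemma cc (c : R) (x:R) : continuous (fun _ => c) x.
Proof. apply continuous_const. Qed.
Lemma cid (x:R) : continuous (fun y : R => y) x.
Proof. apply continuous_id. Qed.
Lemma cpow2 (f : R -> R) (x:R) : continuous f x -> continuous (fun y => f y ^ 2) x.
Proof. intros; apply continuous_ext with (fun y => f y * (f y * 1)).
 intros; simpl; ring. apply cm; auto. apply cm; auto. apply cc. Qed.
Lemma ccos (f : R -> R) (x:R) : continuous f x -> continuous (fun y => cos (f y)) x.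
Proof. intros. refine (continuous_comp f cos x H _). apply (ex_derive_continuous (K:=R_AbsRing) (V:=R_NormedModule)). auto_derive; auto. Qed.
Lemma csin (f : R -> R) (x:R) : continuous f x -> continuous (fun y => sin (f y)) x.
Proof. intros. refine (continuous_comp f sin x H _). apply (ex_derive_continuous (K:=R_AbsRing) (V:=R_NormedModule)). auto_derive; auto. Qed.

Lemma copp (f : R -> R) (x:R) : continuous f x -> continuous (fun y => - f y) x.
Proof. intros; apply (continuous_opp f); auto. Qed.
Ltac cont := repeat first [ assumption | match goal with H : C0 ?h |- continuous ?h _ => apply H end | apply cc | apply cpow2 | apply cmi | apply cm | apply cp | apply copp | apply cid
   | apply ccos | apply csin ].

Lemma exR h a b : C0 h -> ex_RInt h a b.
Proof. intros H; apply (ex_RInt_continuous (V:=R_CompleteNormedModule)); intros; apply H. Qed.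

Lemma RIplus (u v : R -> R) a b : C0 u -> C0 v -> RInt (fun x => u x + v x) a b = RInt u a b + RInt v a b.
Proof. intros; apply (RInt_plus u v); apply exR; auto. Qed.
Lemma RIminus (u v : R -> R) a b : C0 u -> C0 v -> RInt (fun x => u x - v x) a b = RInt u a b - RInt v a b.
Proof. intros; apply (RInt_minus u v); apply exR; auto. Qed.
Lemma RIscal c (u : R -> R) a b : C0 u -> RInt (fun x => c * u x) a b = c * RInt u a b.
Proof. intros; apply (RInt_scal u a b c); apply exR; auto. Qed.
Lemma RIconst (c : R) a b : RInt (fun _ => c) a b = (b - a) * c.
Proof. rewrite RInt_const. reflexivity. Qed.
Lemma RIchasles (h : R -> R) a b c : C0 h -> RInt h a b + RInt h b c = RInt h a c.
Proof. intros; apply (RInt_Chasles h); apply exR; auto. Qed.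
Lemma RIext (u v : R -> R) a b : (forall x, u x = v x) -> RInt u a b = RInt v a b.
Proof. intros; apply RInt_ext; auto. Qed.

Lemma FTC (F f : R -> R) a b : (forall x, is_derive F x (f x)) -> C0 f -> RInt f a b = F b - F a.
Proof. intros; apply is_RInt_unique. apply (is_RInt_derive F f); auto. Qed.

Lemma derive_RInt0 (h : R -> R) x : C0 h -> is_derive (fun t => RInt h 0 t) x (h x).
Proof. intros H. apply (is_derive_RInt h (fun t => RInt h 0 t) 0).
 apply filter_forall. intros; apply (RInt_correct (V:=R_CompleteNormedModule)), exR; auto. apply H. Qed.

Lemma shiftI (h : R -> R) T d : C0 h -> (forall t, h (t + T) = h t) -> RInt h d (d + T) = RInt h 0 T.
Proof. intros Hc Hp.
 rewrite <- (RIchasles h d 0 (d+T)) by auto.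
 rewrite <- (RIchasles h 0 T (d+T)) by auto.
 assert (RInt h T (d+T) = RInt h 0 d).
 { assert (E := RInt_comp_lin h 1 T 0 d). 
   replace (1*0+T) with T in E by ring. replace (1*d+T) with (d+T) in E by ring.
   rewrite <- E by (apply exR; auto). apply RIext. intros. simpl. unfold scal; simpl; unfold mult; simpl.
   rewrite Rmult_1_l. replace (1*x+T) with (x+T) by ring. auto. }
 rewrite H. assert (RInt h d 0 + RInt h 0 d = RInt h d d) by (apply RIchasles; auto).
 rewrite RInt_point in H0. unfold zero in H0; simpl in H0. lra. Qed.

Lemma zeroI (h : R -> R) a b : a < b -> C0 h -> (forall x, 0 <= h x) -> RInt h a b = 0 ->
  forall x, a < x < b -> h x = 0.
Proof. intros Hab Hc Hp Hz x Hx.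
 assert (Hloc : forall y, a <= y <= b -> RInt h a y = 0).
 { intros y Hy. assert (0 <= RInt h a y) by (apply RInt_ge_0; [lra| apply exR; auto| intros; auto]).
   assert (0 <= RInt h y b) by (apply RInt_ge_0; [lra| apply exR; auto| intros; auto]).
   rewrite <- (RIchasles h a y b) in Hz by auto. lra. }
 assert (D : is_derive (fun t => RInt h a t) x (h x)).
 { apply (is_derive_RInt h (fun t => RInt h a t) a).
   apply filter_forall. intros; apply (RInt_correct (V:=R_CompleteNormedModule)), exR; auto. apply Hc. }
 assert (D2 : is_derive (fun _ => 0) x (h x)).
 { apply (is_derive_ext_loc (fun t => RInt h a t)); auto.
   assert (0 < Rmin (x - a) (b - x)) by (apply Rmin_pos; lra).
   exists (mkposreal _ H). intros y Hy. apply Hloc.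
   unfold ball in Hy; simpl in Hy; unfold AbsRing_ball, abs, minus, plus, opp in Hy; simpl in Hy.
   apply Rabs_def2 in Hy. destruct Hy. 
   assert (Rmin (x-a) (b-x) <= x - a) by apply Rmin_l.
   assert (Rmin (x-a) (b-x) <= b - x) by apply Rmin_r. simpl in *. lra. }
 apply is_derive_unique in D2. rewrite Derive_const in D2. auto. Qed.

Lemma dK_der (w w' : R -> R) s c t : (forall x, is_derive w x (w' x)) ->
  sin (s*(t-c) + (1-s)*PI/2) <> 0 ->
  is_derive (fun t => w t ^ 2 * (s * cos (s*(t-c) + (1-s)*PI/2) / sin (s*(t-c) + (1-s)*PI/2))) t
   (2 * w t * w' t * (s * cos (s*(t-c) + (1-s)*PI/2) / sin (s*(t-c) + (1-s)*PI/2))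
     - w t ^2 * (s^2 / (sin (s*(t-c) + (1-s)*PI/2))^2)).
Proof. intros Hd Hs. auto_derive.
 - split. exists (w' t); apply Hd. replace (t + - c) with (t - c) by ring. auto.
 - assert (Derive (fun x => w x) t = w' t) by (apply is_derive_unique; apply Hd). rewrite H.
   replace (t + - c) with (t - c) by ring. set (th := s * (t - c) + (1 - s) * PI / 2) in *.
   assert (E : sin th * sin th + cos th * cos th = 1) by (generalize (sin2_cos2 th); unfold Rsqr; auto).
   replace (s ^ 2) with (s^2 * (sin th * sin th + cos th * cos th)) by (rewrite E; ring).
   field. auto.
Qed.

Lemma exRI (h : R -> R) a b : a <= b -> (forall x, a <= x <= b -> continuous h x) -> ex_RInt h a b.
Proof. intros Hab H. apply (ex_RInt_continuous (V:=R_CompleteNormedModule)).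
 rewrite Rmin_left, Rmax_right by lra. auto. Qed.

Lemma dir_s (w w' : R -> R) c s : (forall x, is_derive w x (w' x)) -> C0 w' -> w c = 0 -> w (c+PI) = 0 -> 0 < s < 1 ->
 s^2 * RInt (fun t => w t^2) c (c+PI) <= RInt (fun t => w' t^2) c (c+PI).
Proof.
 intros Hd Cw' H0 H1 Hs.
 assert (Cw : C0 w) by (intro x; apply (ex_derive_continuous (K:=R_AbsRing) (V:=R_NormedModule)); exists (w' x); apply Hd).
 pose proof PI_RGT_0 as HPI.
 set (th := fun t => s*(t-c) + (1-s)*PI/2).
 set (phi := fun t => s * cos (th t) / sin (th t)).
 set (psi := fun t => s^2 / (sin (th t))^2).
 assert (Hsin : forall t, c <= t <= c+PI -> 0 < sin (th t)).
 { intros t Ht. apply sin_gt_0; unfold th; nra. }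
 assert (Cphi : forall t, c <= t <= c+PI -> continuous phi t).
 { intros t Ht. apply (ex_derive_continuous (K:=R_AbsRing) (V:=R_NormedModule)). unfold phi, th.
   specialize (Hsin t Ht). unfold th in Hsin. auto_derive. replace (t + - c) with (t - c) by ring. lra. }
 assert (Cpsi : forall t, c <= t <= c+PI -> continuous psi t).
 { intros t Ht. apply (ex_derive_continuous (K:=R_AbsRing) (V:=R_NormedModule)). unfold psi, th.
   specialize (Hsin t Ht). unfold th in Hsin. auto_derive. replace (t + - c) with (t - c) by ring.
   apply Rgt_not_eq. apply Rmult_lt_0_compat; lra. }
 set (dK := fun t => 2 * w t * w' t * phi t - w t ^ 2 * psi t).
 assert (HK : is_RInt dK c (c+PI) 0).
 { assert (HH : is_RInt dK c (c+PI) (minus ((fun t => w t ^ 2 * phi t) (c+PI)) ((fun t => w t ^ 2 * phi t) c))).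
   2:{ simpl in HH. rewrite H0, H1 in HH. unfold minus, plus, opp in HH; simpl in HH.
       replace 0 with (0 ^ 2 * phi (c + PI) + - (0 ^ 2 * phi c)) by ring. exact HH. }
   apply (is_RInt_derive (V:=R_CompleteNormedModule) (fun t => w t ^ 2 * phi t) dK c (c+PI)).
   - rewrite Rmin_left, Rmax_right by lra. intros x Hx. unfold dK, phi, psi.
     apply dK_der; auto. specialize (Hsin x Hx). unfold th in Hsin. lra.
   - rewrite Rmin_left, Rmax_right by lra. intros x Hx. unfold dK.
     specialize (Cphi x Hx). specialize (Cpsi x Hx). specialize (Cw x). specialize (Cw' x). cont. }
 set (g := fun t => (w' t - phi t * w t)^2).
 assert (Eid : forall t, c < t < c+PI -> w' t ^ 2 - s^2 * w t ^2 = g t + dK t).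
 { intros t Ht. assert (Hs' := Hsin t (conj (Rlt_le _ _ (proj1 Ht)) (Rlt_le _ _ (proj2 Ht)))).
   unfold g, dK, phi, psi. 
   assert (E : sin (th t) * sin (th t) + cos (th t) * cos (th t) = 1) by (generalize (sin2_cos2 (th t)); unfold Rsqr; auto).
   replace (s ^ 2 / sin (th t) ^ 2) with (s^2 * (sin (th t) * sin (th t) + cos (th t) * cos (th t)) / sin (th t) ^ 2) by (rewrite E; field; lra).
   field. lra. }
 assert (Eg : ex_RInt g c (c+PI)).
 { apply exRI. lra. intros x Hx. unfold g. specialize (Cphi x Hx). specialize (Cw x). specialize (Cw' x). cont. }
 assert (EdK : ex_RInt dK c (c+PI)) by (exists 0; auto).
 assert (L : RInt (fun t => w' t ^ 2 - s^2 * w t ^2) c (c+PI) = RInt g c (c+PI) + RInt dK c (c+PI)).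
 { rewrite (RInt_ext _ (fun t => plus (g t) (dK t))).
   apply (RInt_plus (V:=R_CompleteNormedModule)); auto.
   rewrite Rmin_left, Rmax_right by lra. intros; apply Eid; auto. }
 rewrite (is_RInt_unique dK c (c+PI) 0 HK) in L.
 rewrite RIminus, RIscal in L.
 assert (0 <= RInt g c (c+PI)). { apply RInt_ge_0; auto. lra. intros; unfold g. apply pow2_ge_0. }
 lra.
 all: intro x; specialize (Cw x); specialize (Cw' x); cont.
Qed.

Lemma dirichlet (w w' : R -> R) c : (forall x, is_derive w x (w' x)) -> C0 w' -> w c = 0 -> w (c+PI) = 0 ->
 RInt (fun t => w t^2) c (c+PI) <= RInt (fun t => w' t^2) c (c+PI).
Proof. intros Hd Cw' H0 H1.
 assert (Cw : C0 w) by (intro x; apply (ex_derive_continuous (K:=R_AbsRing) (V:=R_NormedModule)); exists (w' x); apply Hd).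
 pose proof PI_RGT_0.
 set (I := RInt (fun t => w t^2) c (c+PI)). set (J := RInt (fun t => w' t^2) c (c+PI)).
 assert (0 <= J). { apply RInt_ge_0. lra. apply exR. intro; cont. intros; apply pow2_ge_0. }
 destruct (Rle_lt_dec I J) as [HIJ|HIJ]; auto.
 set (r := J / I). assert (Hr : r * I = J) by (unfold r; field; lra).
 assert (0 <= r) by (unfold r; apply Rle_div_r; lra).
 assert (r < 1) by (apply Rlt_div_l; lra).
 assert (Hs := dir_s w w' c ((1 + r)/2) Hd Cw' H0 H1 ltac:(lra)).
 fold I J in Hs. nra.
Qed.

Lemma per_deriv (g g' : R -> R) T : (forall x, is_derive g x (g' x)) -> (forall t, g (t + T) = g t) ->
  forall t, g' (t + T) = g' t.
Proof. intros Hd Hp t.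
 assert (is_derive (fun x => g (x + T)) t (g' (t+T))).
 { apply (is_derive_ext (fun x => g (x + T))); auto.
   assert (H := is_derive_comp g (fun x => x + T) t (g' (t+T)) 1 (Hd (t+T))).
   assert (is_derive (fun x : R => x + T) t 1). { auto_derive; auto; ring. }
   specialize (H H0). simpl in H. unfold scal in H; simpl in H; unfold mult in H; simpl in H.
   rewrite Rmult_1_l in H. exact H. }
 apply (is_derive_ext _ g) in H; auto.
 apply is_derive_unique in H. rewrite (is_derive_unique _ _ _ (Hd t)) in H. auto. Qed.

Lemma cont_pt (h : R -> R) : C0 h -> continuity h.
Proof. intros H x. apply continuity_pt_filterlim. apply H. Qed.

Lemma wirtinger (g g' : R -> R) : (forall x, is_derive g x (g' x)) -> C0 g' ->
  (forall t, g (t + 2*PI) = g t) -> RInt g 0 (2*PI) = 0 ->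
  RInt (fun t => g t^2) 0 (2*PI) <= RInt (fun t => g' t^2) 0 (2*PI).
Proof. intros Hd Cg' Hp H0.
 assert (Cg : C0 g) by (intro x; apply (ex_derive_continuous (K:=R_AbsRing) (V:=R_NormedModule)); exists (g' x); apply Hd).
 pose proof PI_RGT_0.
 set (k := fun t => g (t + PI) - g t).
 assert (Ck : continuity k). { apply cont_pt. intro x. unfold k. cont.
   apply (continuous_comp (fun y => y + PI) g). cont. apply Cg. }
 assert (HkPI : k PI = - k 0).
 { unfold k. replace (PI + PI) with (0 + 2*PI) by ring. rewrite Hp. replace (0 + PI) with PI by ring. ring. }
 destruct (IVT_gen k 0 PI 0 Ck) as [d [Hd1 Hd2]].
 { rewrite HkPI. unfold Rmin, Rmax. destruct (Rle_dec (k 0) (- k 0)); lra. }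
 set (w := fun t => g t - g d).
 assert (Hdw : forall x, is_derive w x (g' x)).
 { intro x. unfold w. auto_derive. exists (g' x); apply Hd.
   assert (E : Derive (fun y => g y) x = g' x) by (apply is_derive_unique; apply Hd). rewrite E; ring. }
 assert (W0 : w d = 0) by (unfold w; ring).
 assert (W1 : w (d + PI) = 0) by (unfold w; unfold k in Hd2; lra).
 assert (W2 : w (d + PI + PI) = 0) by (unfold w; replace (d + PI + PI) with (d + 2*PI) by ring; rewrite Hp; ring).
 assert (A1 := dirichlet w g' d Hdw Cg' W0 W1).
 assert (A2 := dirichlet w g' (d+PI) Hdw Cg' W1 W2).
 assert (Cw : C0 w) by (intro; unfold w; cont).
 assert (S1 := RIchasles (fun t => w t ^ 2) d (d+PI) (d+PI+PI) ltac:(intro; cont)).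
 assert (S2 := RIchasles (fun t => g' t ^ 2) d (d+PI) (d+PI+PI) ltac:(intro; cont)).
 replace (d + PI + PI) with (d + 2*PI) in S1, S2, A2 by ring.
 assert (Hp' := per_deriv g g' (2*PI) Hd Hp).
 rewrite (shiftI (fun t => g' t ^ 2) (2*PI) d) in S2. 2:{ intro; cont. } 2:{ intro t; cbv beta; rewrite Hp'; auto. }
 assert (E1 : RInt (fun t => w t^2) d (d+2*PI) = RInt (fun t => g t^2) 0 (2*PI) + 2*PI * g d ^ 2).
 { rewrite (RIext _ (fun t => (g t ^ 2 + (-2 * g d) * g t) + g d ^ 2) d (d+2*PI)).
   2:{ intro; unfold w; ring. }
   rewrite RIplus, RIplus, RIscal, RIconst; try (intro; cont).
   rewrite (shiftI (fun t => g t ^ 2) (2*PI) d). 2:{ intro; cont. } 2:{ intro t; cbv beta; rewrite Hp; auto. }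
   rewrite (shiftI g (2*PI) d); auto. rewrite H0. match goal with |- ?a = ?b => change (@eq R a b) end. ring. }
 assert (0 <= g d ^ 2) by apply pow2_ge_0.
 match type of S1 with ?a = ?b => change (@eq R a b) in S1 end. match type of S2 with ?a = ?b => change (@eq R a b) in S2 end. match type of E1 with ?a = ?b => change (@eq R a b) in E1 end. assert (0 <= 2*PI*g d^2) by (apply Rmult_le_pos; lra). lra.
Qed.

Ltac toR H := match type of H with ?a = ?b => change (@eq R a b) in H end.
Ltac Rring := match goal with |- ?a = ?b => change (@eq R a b) end; ring.

Lemma der_lin (u u' v v' : R -> R) e x : (forall y, is_derive u y (u' y)) -> (forall y, is_derive v y (v' y)) ->
  is_derive (fun t => u t + e * v t) x (u' x + e * v' x).
Proof. intros Hu Hv. auto_derive. split. exists (u' x); auto. split; auto. exists (v' x); auto.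
 assert (E1: Derive (fun y => u y) x = u' x) by (apply is_derive_unique; auto).
 assert (E2: Derive (fun y => v y) x = v' x) by (apply is_derive_unique; auto).
 rewrite E1, E2. ring. Qed.

Lemma C0_of_der (u u' : R -> R) : (forall y, is_derive u y (u' y)) -> C0 u.
Proof. intros Hd x; apply (ex_derive_continuous (K:=R_AbsRing) (V:=R_NormedModule)); exists (u' x); apply Hd. Qed.

Lemma sq_expand (u v : R -> R) e a b : C0 u -> C0 v ->
  RInt (fun t => (u t + e * v t)^2) a b = RInt (fun t => u t ^2) a b + 2 * e * RInt (fun t => u t * v t) a b
    + e^2 * RInt (fun t => v t ^ 2) a b.
Proof. intros Cu Cv.
 rewrite (RIext _ (fun t => (u t ^2 + (2*e) * (u t * v t)) + e^2 * v t^2)) by (intro; ring).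
 rewrite RIplus, RIplus, RIscal, RIscal; try (intro; cont). Rring. Qed.

Lemma variation (f f' : R -> R) : (forall x, is_derive f x (f' x)) -> C0 f' ->
  (forall t, f (t + 2*PI) = f t) -> RInt f 0 (2*PI) = 0 ->
  RInt (fun t => f t ^ 2) 0 (2*PI) = RInt (fun t => f' t ^ 2) 0 (2*PI) ->
  forall (p p' : R -> R), (forall x, is_derive p x (p' x)) -> C0 p' ->
  (forall t, p (t + 2*PI) = p t) -> RInt p 0 (2*PI) = 0 ->
  RInt (fun t => f' t * p' t) 0 (2*PI) = RInt (fun t => f t * p t) 0 (2*PI).
Proof. intros Hf Cf' Pf If Ef p p' Hp Cp' Pp Ip.
 assert (Cf := C0_of_der f f' Hf). assert (Cp := C0_of_der p p' Hp).
 assert (Hw : forall e, RInt (fun t => (f t + e * p t)^2) 0 (2*PI) <= RInt (fun t => (f' t + e * p' t)^2) 0 (2*PI)).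
 { intro e. apply (wirtinger (fun t => f t + e * p t) (fun t => f' t + e * p' t)).
   - intro x. apply der_lin; auto.
   - intro; cont.
   - intro t. rewrite Pf, Pp. auto.
   - rewrite RIplus, RIscal, If, Ip; try (intro; cont). Rring. }
 set (A := RInt (fun t => f t * p t) 0 (2*PI)). set (B := RInt (fun t => f' t * p' t) 0 (2*PI)).
 set (P := RInt (fun t => p t ^ 2) 0 (2*PI)). set (Q := RInt (fun t => p' t ^ 2) 0 (2*PI)).
 assert (Hw2 : forall e, 0 <= 2 * e * (B - A) + e^2 * (Q - P)).
 { intro e. specialize (Hw e). rewrite !sq_expand in Hw by auto. fold A B P Q in Hw. toR Ef. lra. }
 set (D := B - A). set (Cc := Q - P). fold D Cc in Hw2.
 set (M := Rabs Cc + 1). assert (HM : 0 < M) by (unfold M; pose proof (Rabs_pos Cc); lra).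
 assert (HC : Cc <= Rabs Cc) by apply RRle_abs.
 specialize (Hw2 (- D / M)).
 assert (H2 : 0 <= D^2 * (Cc - 2 * M)).
 { replace (D^2 * (Cc - 2*M)) with (M^2 * (2 * (- D / M) * D + (- D / M)^2 * Cc)) by (field; lra).
   apply Rmult_le_pos; auto. apply pow2_ge_0. }
 assert (Cc - 2*M < 0) by (unfold M; pose proof (Rabs_pos Cc); lra).
 assert (D^2 <= 0) by nra. assert (D = 0) by nra. unfold D in *. lra.
Qed.

Lemma der_sub_const (u u' : R -> R) c x : (forall y, is_derive u y (u' y)) ->
  is_derive (fun t => u t - c) x (u' x).
Proof. intros Hu. auto_derive. exists (u' x); auto.
 assert (E1: Derive (fun y => u y) x = u' x) by (apply is_derive_unique; auto). rewrite E1. ring. Qed.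

Lemma per_int (u : R -> R) : C0 u -> (forall t, u (t + 2*PI) = u t) -> RInt u 0 (2*PI) = 0 ->
  forall t, RInt u 0 (t + 2*PI) = RInt u 0 t.
Proof. intros Cu Pu Iu t. rewrite <- (RIchasles u 0 t (t + 2*PI)) by auto.
 rewrite (shiftI u (2*PI) t), Iu by auto. Rring. Qed.

Lemma characterize (f f' : R -> R) : (forall x, is_derive f x (f' x)) -> C0 f' ->
  (forall t, f (t + 2*PI) = f t) -> RInt f 0 (2*PI) = 0 ->
  RInt (fun t => f t ^ 2) 0 (2*PI) = RInt (fun t => f' t ^ 2) 0 (2*PI) ->
  forall t, f t = f 0 * cos t + f' 0 * sin t.
Proof. intros Hf Cf' Pf If Ef.
 assert (Cf := C0_of_der f f' Hf).
 pose proof PI_RGT_0 as HPI.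
 set (F := fun t => RInt f 0 t).
 assert (HF : forall x, is_derive F x (f x)) by (intro; apply derive_RInt0; auto).
 assert (CF := C0_of_der F f HF).
 assert (PF : forall t, F (t + 2*PI) = F t) by (intro; apply per_int; auto).
 assert (Pf' := per_deriv f f' (2*PI) Hf Pf).
 set (h := fun t => f' t + F t).
 assert (Ch : C0 h) by (intro; unfold h; cont).
 assert (Ph : forall t, h (t + 2*PI) = h t) by (intro; unfold h; rewrite Pf', PF; auto).
 set (m := RInt h 0 (2*PI) / (2*PI)).
 set (hm := fun t => h t - m).
 assert (Chm : C0 hm) by (intro; unfold hm; cont).
 assert (Phm : forall t, hm (t + 2*PI) = hm t) by (intro; unfold hm; rewrite Ph; auto).
 assert (Ihm : RInt hm 0 (2*PI) = 0).
 { unfold hm. rewrite RIminus, RIconst by (auto; intro; cont). unfold m.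
   match goal with |- ?a = ?b => change (@eq R a b) end. field. lra. }
 set (Phi := fun t => RInt hm 0 t).
 assert (HPhi : forall x, is_derive Phi x (hm x)) by (intro; apply derive_RInt0; auto).
 assert (CPhi := C0_of_der Phi hm HPhi).
 set (c0 := RInt Phi 0 (2*PI) / (2*PI)).
 set (p := fun t => Phi t - c0).
 assert (Hp : forall x, is_derive p x (hm x)) by (intro; unfold p; apply der_sub_const; auto).
 assert (Pp : forall t, p (t + 2*PI) = p t) by (intro; unfold p, Phi; rewrite per_int; auto).
 assert (Ip : RInt p 0 (2*PI) = 0).
 { unfold p. rewrite RIminus, RIconst by (auto; intro; cont). unfold c0.
   match goal with |- ?a = ?b => change (@eq R a b) end. field. lra. }
 assert (V := variation f f' Hf Cf' Pf If Ef p hm Hp Chm Pp Ip).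
 assert (Cp := C0_of_der p hm Hp).
 assert (BP : RInt (fun t => f t * p t + F t * hm t) 0 (2*PI) = 0).
 { rewrite (FTC (fun t => F t * p t)). 
   - unfold F at 1. rewrite If. unfold F. rewrite RInt_point. unfold zero; simpl. ring.
   - intro x. auto_derive. split. exists (f x); auto. split; auto. exists (hm x); auto.
     assert (E1: Derive (fun y => F y) x = f x) by (apply is_derive_unique; auto).
     assert (E2: Derive (fun y => p y) x = hm x) by (apply is_derive_unique; auto).
     rewrite E1, E2. ring.
   - intro; cont. }
 rewrite RIplus in BP by (intro; cont).
 assert (Z : RInt (fun t => hm t ^ 2) 0 (2*PI) = 0).
 { rewrite (RIext _ (fun t => (f' t * hm t + F t * hm t) - m * hm t)).
   2:{ intro; unfold hm, h; ring. }
   rewrite RIminus, RIplus, RIscal, Ihm, V; try (intro; cont). toR BP. match goal with |- ?a = ?b => change (@eq R a b) end; lra. }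
 assert (Hm : forall t, h t = m).
 { intro t. assert (Z' : RInt (fun t => hm t ^ 2) (t - PI) (t - PI + 2*PI) = 0).
   { rewrite shiftI; auto. intro; cont. intro; cbv beta; rewrite Phm; auto. }
   assert (hm t ^ 2 = 0).
   { apply (zeroI (fun t => hm t ^ 2) (t - PI) (t - PI + 2*PI)); auto.
     pose proof PI_RGT_0. lra. intro; cont. intro; apply pow2_ge_0. pose proof PI_RGT_0. split; lra. }
   unfold hm in H. nra. }
 assert (Hf' : forall x, is_derive f' x (- f x)).
 { intro x. assert (Hx : forall t, m - F t = f' t) by (intro t; rewrite <- (Hm t); unfold h; ring).
   apply (is_derive_ext (fun t => m - F t) f' x (- f x) Hx).
   auto_derive. exists (f x); auto.
   assert (E1: Derive (fun y => F y) x = f x) by (apply is_derive_unique; auto). rewrite E1. ring. }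
 set (a := f 0). set (b := f' 0).
 set (En := fun t => (f t - a * cos t - b * sin t)^2 + (f' t + a * sin t - b * cos t)^2).
 assert (HE : forall x, is_derive En x 0).
 { intro x. unfold En. auto_derive.
   { repeat split; try (exists (f' x); apply Hf); try (exists (- f x); apply Hf'). }
   assert (E1: Derive (fun y => f y) x = f' x) by (apply is_derive_unique; auto).
   assert (E2: Derive (fun y => f' y) x = - f x) by (apply is_derive_unique; auto).
   rewrite E1, E2. ring. }
 intro t.
 assert (Et : En t = En 0).
 { assert (K := FTC En (fun _ => 0) 0 t HE ltac:(intro; cont)). rewrite RIconst in K. toR K. lra. }
 assert (E0 : En 0 = 0). { unfold En. rewrite cos_0, sin_0. unfold a, b. ring. }
 rewrite E0 in Et. unfold En in Et.
 assert (H1 := pow2_ge_0 (f t - a * cos t - b * sin t)).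
 assert (H2 := pow2_ge_0 (f' t + a * sin t - b * cos t)).
 assert ((f t - a * cos t - b * sin t)^2 = 0) by lra. fold a b. nra.
Qed.

Lemma tele (G : nat -> R) n : sum_n_m (fun j => G j - G (j-1)%nat) 1 n = G n - G 0%nat.
Proof. induction n.
 - rewrite sum_n_m_zero by lia. unfold zero; simpl. ring.
 - rewrite sum_n_Sm by lia. rewrite IHn. unfold plus; simpl. replace (n - 0)%nat with n by lia. ring. Qed.

Lemma sum_lin2 (u v : nat -> R) c1 c2 a b :
  sum_n_m (fun j => c1 * u j + c2 * v j) a b = c1 * sum_n_m u a b + c2 * sum_n_m v a b.
Proof. rewrite (sum_n_m_plus (G:=R_AbelianMonoid) (fun j => c1 * u j) (fun j => c2 * v j)).
 rewrite (sum_n_m_mult_l (K:=R_Ring) c1 u), (sum_n_m_mult_l (K:=R_Ring) c2 v). reflexivity. Qed.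

Lemma sum_scal (u : nat -> R) c a b : sum_n_m (fun j => c * u j) a b = c * sum_n_m u a b.
Proof. apply (sum_n_m_mult_l (K:=R_Ring) c u). Qed.

Lemma trig_sum (al be : R) n : sin (al/2) <> 0 -> cos (INR n * al) = 1 -> sin (INR n * al) = 0 ->
  sum_n_m (fun j => cos (al * INR (j-1) + be)) 1 n = 0 /\ sum_n_m (fun j => sin (al * INR (j-1) + be)) 1 n = 0.
Proof. intros Hs Hc Hsn. split.
 - apply (Rmult_eq_reg_l (2 * sin (al/2))). 2:{ intro; apply Hs; lra. }
   rewrite Rmult_0_r. rewrite <- sum_scal.
   rewrite (sum_n_m_ext_loc _ (fun j => (fun j => sin (al * INR j - al/2 + be)) j - (fun j => sin (al * INR j - al/2 + be)) (j-1)%nat)).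
   + rewrite tele. simpl. replace (al * INR n - al / 2 + be) with (INR n * al + (be - al/2)) by ring.
     rewrite sin_plus, Hc, Hsn. replace (al * 0 - al / 2 + be) with (be - al/2) by field. ring.
   + intros j Hj. rewrite minus_INR by lia. simpl.
     replace (al * (INR j - 1) - al / 2 + be) with ((al * (INR j - 1) + be) - al/2) by field.
     replace (al * INR j - al / 2 + be) with ((al * (INR j - 1) + be) + al/2) by field.
     rewrite sin_plus, sin_minus. ring.
 - apply (Rmult_eq_reg_l (2 * sin (al/2))). 2:{ intro; apply Hs; lra. }
   rewrite Rmult_0_r. rewrite <- sum_scal.
   rewrite (sum_n_m_ext_loc _ (fun j => (fun j => - cos (al * INR j - al/2 + be)) j - (fun j => - cos (al * INR j - al/2 + be)) (j-1)%nat)).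
   + rewrite tele. simpl. replace (al * INR n - al / 2 + be) with (INR n * al + (be - al/2)) by ring.
     rewrite cos_plus, Hc, Hsn. replace (al * 0 - al / 2 + be) with (be - al/2) by field. ring.
   + intros j Hj. rewrite minus_INR by lia. simpl.
     replace (al * (INR j - 1) - al / 2 + be) with ((al * (INR j - 1) + be) - al/2) by field.
     replace (al * INR j - al / 2 + be) with ((al * (INR j - 1) + be) + al/2) by field.
     rewrite cos_plus, cos_minus. ring.
Qed.

Lemma pw1 a b s A y : (a * cos A + b * sin A) * (s * cos y) =
  (s/2*a) * cos (A + y) + (s/2*a) * cos (A - y) + (s/2*b) * sin (A + y) + (s/2*b) * sin (A - y).
Proof. rewrite cos_plus, cos_minus, sin_plus, sin_minus. field. Qed.
Lemma pw2 a b s A y : (a * cos A + b * sin A) * (s * sin y) =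
  (s/2*a) * sin (A + y) + (-(s/2)*a) * sin (A - y) + (s/2*b) * cos (A - y) + (-(s/2)*b) * cos (A + y).
Proof. rewrite cos_plus, cos_minus, sin_plus, sin_minus. field. Qed.

Lemma sum_lin4 (u1 u2 u3 u4 : nat -> R) c1 c2 c3 c4 a b :
  sum_n_m (fun j => c1 * u1 j + c2 * u2 j + c3 * u3 j + c4 * u4 j) a b =
  c1 * sum_n_m u1 a b + c2 * sum_n_m u2 a b + c3 * sum_n_m u3 a b + c4 * sum_n_m u4 a b.
Proof.
 rewrite (sum_n_m_plus (G:=R_AbelianMonoid) (fun j => c1 * u1 j + c2 * u2 j + c3 * u3 j) (fun j => c4 * u4 j)).
 rewrite (sum_n_m_plus (G:=R_AbelianMonoid) (fun j => c1 * u1 j + c2 * u2 j) (fun j => c3 * u3 j)).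
 rewrite sum_lin2, !sum_scal. reflexivity. Qed.

Lemma orth (a b : R) n k : (5 <= n)%nat -> (2 <= k)%nat -> (2*k+1 <= n)%nat ->
  dotn n (fun j => a * cos (2*PI/INR n * INR j) + b * sin (2*PI/INR n * INR j)) (e_cos n k) = 0 /\
  dotn n (fun j => a * cos (2*PI/INR n * INR j) + b * sin (2*PI/INR n * INR j)) (e_sin n k) = 0.
Proof. intros Hn Hk Hkn.
 pose proof PI_RGT_0 as HPI.
 assert (Hn0 : 0 < INR n) by (apply lt_0_INR; lia).
 assert (Hk1 : INR k + 1 < INR n) by (rewrite <- S_INR; apply lt_INR; lia).
 assert (Hk2 : 1 < INR k) by (replace 1 with (INR 1) by reflexivity; apply lt_INR; lia).
 set (th := 2*PI/INR n).
 set (al1 := th * INR k + th). set (al2 := th - th * INR k).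
 assert (T1 := trig_sum al1 th n).
 assert (T2 := trig_sum al2 th n).
 destruct T1 as [C1 S1].
 { replace (al1/2) with (PI * ((INR k + 1) / INR n)) by (unfold al1, th; field; lra).
   apply Rgt_not_eq, sin_gt_0. apply Rmult_lt_0_compat; auto. apply Rdiv_lt_0_compat; lra.
   rewrite <- (Rmult_1_r PI) at 2. apply Rmult_lt_compat_l; auto. apply Rlt_div_l; lra. }
 { replace (INR n * al1) with (0 + 2 * INR (S k) * PI) by (unfold al1, th; rewrite S_INR; field; lra).
   rewrite cos_period; apply cos_0. }
 { replace (INR n * al1) with (0 + 2 * INR (S k) * PI) by (unfold al1, th; rewrite S_INR; field; lra).
   rewrite sin_period; apply sin_0. }
 destruct T2 as [C2 S2].
 { replace (al2/2) with (- (PI * ((INR k - 1) / INR n))) by (unfold al2, th; field; lra).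
   rewrite sin_neg. apply Ropp_neq_0_compat.
   apply Rgt_not_eq, sin_gt_0. apply Rmult_lt_0_compat; auto. apply Rdiv_lt_0_compat; lra.
   rewrite <- (Rmult_1_r PI) at 2. apply Rmult_lt_compat_l; auto. apply Rlt_div_l; lra. }
 { replace (INR n * al2) with (- (0 + 2 * INR (k - 1) * PI)) by (unfold al2, th; rewrite minus_INR by lia; simpl; field; lra).
   rewrite cos_neg, cos_period; apply cos_0. }
 { replace (INR n * al2) with (- (0 + 2 * INR (k - 1) * PI)) by (unfold al2, th; rewrite minus_INR by lia; simpl; field; lra).
   rewrite sin_neg, sin_period, sin_0; ring. }
 set (s := sqrt (2 / INR n)).
 split; unfold dotn, e_cos, e_sin; fold th s.
 - rewrite (sum_n_m_ext_loc _ (fun j => (s/2*a) * cos (al1 * INR (j-1) + th) + (s/2*a) * cos (al2 * INR (j-1) + th)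
        + (s/2*b) * sin (al1 * INR (j-1) + th) + (s/2*b) * sin (al2 * INR (j-1) + th))).
   + rewrite sum_lin4, C1, C2, S1, S2. ring.
   + intros j Hj. replace (th * INR j) with (th * INR (j-1) + th) by (rewrite minus_INR by lia; simpl; ring).
     rewrite pw1. unfold al1, al2.
     replace ((th * INR k + th) * INR (j - 1) + th) with (th * INR (j - 1) + th + th * INR (j - 1) * INR k) by ring.
     replace ((th - th * INR k) * INR (j - 1) + th) with (th * INR (j - 1) + th - th * INR (j - 1) * INR k) by ring.
     reflexivity.
 - rewrite (sum_n_m_ext_loc _ (fun j => (s/2*a) * sin (al1 * INR (j-1) + th) + (-(s/2)*a) * sin (al2 * INR (j-1) + th)
        + (s/2*b) * cos (al2 * INR (j-1) + th) + (-(s/2)*b) * cos (al1 * INR (j-1) + th))).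
   + rewrite sum_lin4, C1, C2, S1, S2. ring.
   + intros j Hj. replace (th * INR j) with (th * INR (j-1) + th) by (rewrite minus_INR by lia; simpl; ring).
     rewrite pw2. unfold al1, al2.
     replace ((th * INR k + th) * INR (j - 1) + th) with (th * INR (j - 1) + th + th * INR (j - 1) * INR k) by ring.
     replace ((th - th * INR k) * INR (j - 1) + th) with (th * INR (j - 1) + th - th * INR (j - 1) * INR k) by ring.
     reflexivity.
Qed.

Lemma proj_zero (f : R -> R) a b n k y : (forall t, f t = a * cos t + b * sin t) ->
  (5 <= n)%nat -> (2 <= k)%nat -> (2*k+1 <= n)%nat -> is_proj_Hk n k (Xvec f n) y -> sqnorm n y = 0.
Proof. intros Hf Hn Hk Hkn [[A [B HAB]] Horth].
 destruct (orth a b n k Hn Hk Hkn) as [O1 O2].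
 assert (DXy : dotn n (Xvec f n) y = 0).
 { unfold dotn. rewrite (sum_n_m_ext_loc _ (fun j =>
      A * ((a * cos (2*PI/INR n * INR j) + b * sin (2*PI/INR n * INR j)) * e_cos n k j)
    + B * ((a * cos (2*PI/INR n * INR j) + b * sin (2*PI/INR n * INR j)) * e_sin n k j))).
   - rewrite sum_lin2. unfold dotn in O1, O2. rewrite O1, O2. ring.
   - intros j Hj. rewrite HAB by lia. unfold Xvec. rewrite Hf. match goal with |- ?a = ?b => change (@eq R a b) end; ring. }
 assert (Ho := Horth y (ex_intro _ A (ex_intro _ B HAB))).
 unfold sqnorm, dotn in *.
 rewrite (sum_n_m_ext_loc _ (fun j => 1 * (Xvec f n j * y j) + (-1) * ((Xvec f n j - y j) * y j))).
 - rewrite sum_lin2, DXy, Ho. ring.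
 - intros; match goal with |- ?a = ?b => change (@eq R a b) end; ring.
Qed.

Theorem lemma3p2 (f : R -> R) (P : nat -> nat -> nat -> R) :
  (forall t, f (t + 2 * PI) = f t) ->
  (forall t, ex_derive f t) ->
  (forall t, continuous (Derive f) t) ->
  RInt f 0 (2 * PI) = 0 ->
  RInt (fun t => f t ^ 2) 0 (2 * PI) = RInt (fun t => Derive f t ^ 2) 0 (2 * PI) ->
  (forall n k, Nat.Odd n -> (5 <= n)%nat -> (1 <= k <= (n - 1) / 2)%nat ->
     is_proj_Hk n k (Xvec f n) (P n k)) ->
  is_lim_seq
    (fun m => let n := (2 * m + 5)%nat in
       / INR n * sum_n_m (fun k => sqnorm n (P n k)) 2 ((n - 1) / 2))
    0.
Proof. intros Hper Hder Hcont Hint Heq Hproj.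
 assert (Hf : forall x, is_derive f x (Derive f x)) by (intro; apply Derive_correct; auto).
 assert (Ch := characterize f (Derive f) Hf Hcont Hper Hint Heq).
 apply is_lim_seq_ext with (fun _ => 0); [| apply is_lim_seq_const].
 intro m. cbv zeta.
 assert (Hd : ((2 * m + 5 - 1) / 2 = m + 2)%nat).
 { replace (2 * m + 5 - 1)%nat with ((m+2)*2)%nat by lia. apply Nat.div_mul. lia. }
 rewrite Hd.
 rewrite (sum_n_m_ext_loc _ (fun _ => zero)).
 - rewrite sum_n_m_const_zero. unfold zero; simpl. ring.
 - intros k Hk. apply (proj_zero f (f 0) (Derive f 0) (2*m+5) k); auto; try lia.
   apply Hproj. exists (m+2)%nat. lia. lia. rewrite Hd. lia.
Qed.
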